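(* Let $m,n\ge 3$ be integers. If either ($m\not\equiv 0 \pmod 4$ and $n\neq 4$) or ($n\not\equiv 0\pmod 4$ and $m\neq 4$), then the direct product $C_m\times C_n$ is not a distance magic graph.
   Context: All graphs are finite and simple; $C_n$ denotes the cycle on $n$ vertices. For a graph $G$ and vertex $x$, $N(x)$ is the (open) neighborhood of $x$. A distance magic labeling of a graph $G$ of order $N$ is a bijection $\ell\colon V(G)\to\{1,\dots,N\}$ for which there is a constant $k$ such that $\sum_{y\in N(x)}\ell(y)=k$ for every $x\in V(G)$; $G$ is distance magic if it admits such a labeling. The direct product $G\times H$ has vertex set $V(G)\times V(H)$, with $(g,h)$ adjacent to $(g',h')$ iff $gg'\in E(G)$ and $hh'\in E(H)$. *)

(* Defs.v *)
From mathcomp Require Import all_boot.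
Set Implicit Arguments. Unset Strict Implicit. Unset Printing Implicit Defensive.

Definition cycle_adj (n : nat) : rel 'I_n :=
  fun i j => (j == (i.+1 %% n) :> nat) || (i == (j.+1 %% n) :> nat).

Definition direct_prod (T U : finType) (e : rel T) (f : rel U) : rel (T * U) :=
  fun x y => e x.1 y.1 && f x.2 y.2.

Definition nbhd (T : finType) (e : rel T) (x : T) : {set T} := [set y | e x y].

Definition distance_magic_labeling (T : finType) (e : rel T) (l : T -> nat) : Prop :=
  injective l /\ (forall x, 1 <= l x <= #|T|) /\
  exists k, forall x, \sum_(y in nbhd e x) l y = k.

Definition distance_magic (T : finType) (e : rel T) : Prop :=
  exists l : T -> nat, distance_magic_labeling e l.
Arguments cycle_adj n : clear implicits.

(* Main.v *)
Require Import Defs.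
From mathcomp Require Import all_boot.
From mathcomp Require Import zify.

Lemma nbhd_cyc n (x : 'I_n) : nbhd (cycle_adj n) x = [set ordS x; ord_pred x].
Proof.
apply/setP => y; rewrite !inE /cycle_adj.
congr orb.
apply/eqP/eqP => [h|->].
  have -> : x = ordS y by apply: val_inj.
  by rewrite ordSK.
by rewrite -[RHS]/(val (ordS (ord_pred x))) ord_predK.
Qed.

Lemma ordS_val n (x : 'I_n) t : val (iter t (@ordS n) x) = (x + t) %% n.
Proof.
elim: t => [|t IH] /=; first by rewrite addn0 modn_small.
by rewrite /= IH -addn1 modnDml -addnA addn1.
Qed.

Lemma ordS2_neq n (x : 'I_n) : 2 < n -> ordS x != ord_pred x.
Proof.
move=> hn; apply/negP => /eqP h.
have : ordS (ordS x) = x by rewrite h ord_predK.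
move/(congr1 val); rewrite -[ordS (ordS x)]/(iter 2 (@ordS n) x) ordS_val.
move=> e; have : (x + 2 == x + 0 %[mod n]) by rewrite addn0 e modn_small.
by rewrite eqn_modDl mod0n modn_small.
Qed.

Lemma ordS4_neq n (x : 'I_n) : 2 < n -> n != 4 -> iter 4 (@ordS n) x != x.
Proof.
move=> hn hn4; apply/negP => /eqP /(congr1 val); rewrite ordS_val.
move=> e; have : (x + 4 == x + 0 %[mod n]) by rewrite addn0 e modn_small.
rewrite eqn_modDl mod0n => /eqP h.
have hle : n <= 4 by apply: dvdn_leq => //; rewrite /dvdn h.
have e3 : n = 3 by lia.
by subst n.
Qed.

Lemma cyc4 n (f : 'I_n -> nat) k :
  (forall x, f (ordS x) + f (ord_pred x) = k) -> forall x, f (iter 4 (@ordS n) x) = f x.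
Proof.
move=> H.
have H2 x : f (iter 2 (@ordS n) x) + f x = k by have := H (ordS x); rewrite ordSK.
move=> x; have h1 := H2 x; have h2 := H2 (iter 2 (@ordS n) x).
change (f (iter 4 (@ordS n) x) + f (iter 2 (@ordS n) x) = k) in h2; lia.
Qed.

Lemma cyc2 n (f : 'I_n -> nat) k : n %% 4 != 0 ->
  (forall x, f (ordS x) + f (ord_pred x) = k) -> forall x, f (iter 2 (@ordS n) x) = f x.
Proof.
move=> hn H x.
have H4q q y : f (iter (4 * q) (@ordS n) y) = f y.
  elim: q => [|q IH] //; by rewrite mulnS iterD (@cyc4 n f k H).
have [q [s hqs]] : exists q s, 4 * q = 2 + s * n.
  have := divn_eq n 4; have : n %% 4 < 4 by rewrite ltn_pmod.
  move: hn; set r := n %% 4; set d := n %/ 4 => hr hr4 hnd.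
  have : r = 1 \/ r = 2 \/ r = 3 by lia.
  case=> [e|[e|e]].
  - by exists (2 * d + 1), 2; lia.
  - by exists (d + 1), 1; lia.
  - by exists (2 * d + 2), 2; lia.
have -> : iter 2 (@ordS n) x = iter (4 * q) (@ordS n) x.
  by apply: val_inj; rewrite !ordS_val hqs addnA [_ + s * n]addnC modnMDl.
exact: H4q.
Qed.

Lemma core m n (F : 'I_m -> 'I_n -> nat) k : m %% 4 != 0 -> 2 < n -> n != 4 ->
  (forall a b c d, F a b = F c d -> b = d) ->
  (forall x y, F (ordS x) (ordS y) + F (ordS x) (ord_pred y)
             + F (ord_pred x) (ordS y) + F (ord_pred x) (ord_pred y) = k) -> False.
Proof.
move=> hm hn hn4 Finj H.
pose g := fun a y => F a (ordS y) + F a (ord_pred y).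
have Hg y x : g (ordS x) y + g (ord_pred x) y = k by rewrite /g -(H x y); lia.
have g2 y x : g (iter 2 (@ordS m) x) y = g x y := @cyc2 m (fun a => g a y) k hm (Hg y) x.
have gc x y : g x y + g x y = k.
  by have := Hg y (ordS x); rewrite ordSK -[ordS (ordS x)]/(iter 2 (@ordS m) x) g2.
have m0 : 0 < m by case: m hm F H Finj g Hg g2 gc.
have n0 : 0 < n by lia.
pose a := Ordinal m0; pose y0 := Ordinal n0.
have Hh y : F a (ordS y) + F a (ord_pred y) = g a y0.
  by have := gc a y; have := gc a y0; rewrite /g; lia.
have := @cyc4 n (F a) _ Hh y0 => /Finj /eqP.
by rewrite (negbTE (@ordS4_neq n y0 hn hn4)).
Qed.

Lemma sum_formula m n (l : 'I_m * 'I_n -> nat) x y : 2 < m -> 2 < n ->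
  \sum_(p in nbhd (direct_prod (cycle_adj m) (cycle_adj n)) (x, y)) l p =
  l (ordS x, ordS y) + l (ordS x, ord_pred y) + l (ord_pred x, ordS y) + l (ord_pred x, ord_pred y).
Proof.
move=> hm hn.
rewrite (eq_bigl (fun p => (p.1 \in nbhd (cycle_adj m) x) && (p.2 \in nbhd (cycle_adj n) y))); last first.
  by case=> a b; rewrite !inE.
rewrite (eq_bigr (fun p => l (p.1, p.2))); last by case.
rewrite -(pair_big (fun a => a \in nbhd (cycle_adj m) x) (fun b => b \in nbhd (cycle_adj n) y) (fun a b => l (a, b))) /=.
rewrite !nbhd_cyc big_setU1 /=; last by rewrite inE (@ordS2_neq _ _ hm).
rewrite big_set1 !big_setU1 /= ?inE ?(@ordS2_neq _ _ hn) //.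
by rewrite !big_set1 !addnA.
Qed.

Theorem mainTheorem9 (m n : nat) (hm : 3 <= m) (hn : 3 <= n) :
  ((m %% 4 != 0) && (n != 4)) || ((n %% 4 != 0) && (m != 4)) ->
  ~ distance_magic (direct_prod (cycle_adj m) (cycle_adj n)).
Proof.
move=> hyp [l [linj [_ [k hk]]]].
have Hs x y := @sum_formula m n l x y hm hn.
case/orP: hyp => /andP [h4 hne].
- apply: (@core m n (fun a b => l (a, b)) k h4 hn hne).
    by move=> a b c d /linj [].
  by move=> x y; rewrite -(hk (x, y)) Hs.
- apply: (@core n m (fun b a => l (a, b)) k h4 hm hne).
    by move=> a b c d /linj [].
  by move=> x y; rewrite -(hk (y, x)) Hs; lia.
Qed.
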